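(* For all $\delta_1,\delta_2\in\mathcal{D}^{LSL}$ and every $t\in[0,1]$, $$(\delta_1\ast\delta_2)(t)\le \min\{\delta_1(t),\delta_2(t)\}.$$
   Context: $\lambda$ denotes Lebesgue measure on $[0,1]$. Let $\mathcal{D}$ be the set of all functions $\delta:[0,1]\to[0,1]$ with $\delta(u)\le u$ for all $u$, $\delta(1)=1$, $\delta$ non-decreasing, and $|\delta(v)-\delta(u)|\le 2|v-u|$ for all $u,v$. Let $\mathcal{D}^{LSL}$ be the set of $\delta\in\mathcal{D}$ such that $x\mapsto \delta(x)/x$ is non-decreasing on $(0,1]$ and $x\mapsto \delta(x)/x^2$ is non-increasing on $(0,1]$. For $\delta_1,\delta_2\in\mathcal{D}^{LSL}$ the star product $\delta_1\ast\delta_2:[0,1]\to[0,1]$ is defined by $(\delta_1\ast\delta_2)(0):=0$ and, for $x\in(0,1]$, $$(\delta_1\ast\delta_2)(x):=\frac{1}{x}\delta_1(x)\delta_2(x)+x^2\int_{[x,1]}\left(\tfrac{\delta_1(u)}{u}\right)'\left(\tfrac{\delta_2(u)}{u}\right)'\,d\lambda(u),$$ where the derivatives exist $\lambda$-almost everywhere. *)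

(* Defs.v *)
From HB Require Import structures.
From mathcomp Require Import all_boot all_order all_algebra.
From mathcomp Require Import all_classical all_reals all_analysis.
Set Implicit Arguments. Unset Strict Implicit. Unset Printing Implicit Defensive.
Import Order.TTheory GRing.Theory Num.Theory.
Local Open Scope classical_set_scope.
Local Open Scope ring_scope.

Section Defs.
Variable R : realType.

(* delta : [0,1] -> [0,1], represented as R -> R; only values on [0,1] matter. *)
Definition in_D (d : R -> R) : Prop :=
  (forall u, 0 <= u <= 1 -> 0 <= d u /\ d u <= 1) /\
  (forall u, 0 <= u <= 1 -> d u <= u) /\
  d 1 = 1 /\
  (forall u v, 0 <= u -> u <= v -> v <= 1 -> d u <= d v) /\
  (forall u v, 0 <= u <= 1 -> 0 <= v <= 1 -> `|d v - d u| <= 2 * `|v - u|).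

Definition in_DLSL (d : R -> R) : Prop :=
  in_D d /\
  (forall x y, 0 < x -> x <= y -> y <= 1 -> d x / x <= d y / y) /\
  (forall x y, 0 < x -> x <= y -> y <= 1 -> d y / (y ^+ 2) <= d x / (x ^+ 2)).

(* star product; derivatives are the (a.e. existing) derivatives derive1 *)
Definition star (d1 d2 : R -> R) (x : R) : R :=
  if x == 0 then 0 else
  d1 x * d2 x / x +
  x ^+ 2 * Rintegral (@lebesgue_measure R) `[x, 1]
     (fun u => derive1 (fun v => d1 v / v) u * derive1 (fun v => d2 v / v) u).
End Defs.

(* Main.v *)
Require Import Defs.
From HB Require Import structures.
From mathcomp Require Import all_boot all_order all_algebra.
From mathcomp Require Import all_classical all_reals all_analysis.
From mathcomp Require Import ring lra measurable_realfun.
Import Order.TTheory GRing.Theory Num.Theory.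
Local Open Scope ring_scope.
Import numFieldNormedType.Exports.

Section S.
Local Open Scope classical_set_scope.
Variable R : realType.

Lemma lip_cont (f : R -> R) (K : R) : 0 < K ->
  (forall x y, `|f x - f y| <= K * `|x - y|) -> continuous f.
Proof.
move=> K0 H x; apply/cvgrPdist_le => e e0.
apply/nbhs_ballP; exists (e / K); first by apply: divr_gt0.
move=> y /= hy.
rewrite (le_trans (H x y)) // -ler_pdivlMl // mulrC; exact: ltW.
Qed.

Definition clamp (t x : R) := Num.max (t / 2) (Num.min x 1).

Lemma clamp_mono t x y : x <= y -> 0 <= clamp t y - clamp t x <= y - x.
Proof.
move=> xy; rewrite /clamp.
case: (leP x 1) => hx; case: (leP y 1) => hy;
[case: (leP (t/2) x) => hx2; case: (leP (t/2) y) => hy2|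
 case: (leP (t/2) x) => hx2; case: (leP (t/2) 1) => hy2|
 case: (leP (t/2) 1) => hx2; case: (leP (t/2) y) => hy2|
 case: (leP (t/2) 1) => hx2; case: (leP (t/2) 1) => hy2];
apply/andP; split; lra.
Qed.

Lemma clamp_lip t x y : `|clamp t x - clamp t y| <= `|x - y|.
Proof.
wlog xy : x y / x <= y.
  move=> W; have [h|h] := leP x y; first exact: W.
  by rewrite distrC (distrC x); apply: W; exact: ltW.
have /andP[h1 h2] := @clamp_mono t x y xy.
by rewrite distrC (distrC x) !ger0_norm // subr_ge0.
Qed.

Definition ft (d : R -> R) (t x : R) := d (clamp t x) / clamp t x.

Lemma clamp_in t x : 0 < t <= 1 -> t / 2 <= clamp t x <= 1.
Proof.
move=> /andP[t0 t1]; rewrite /clamp.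
case: (leP x 1) => hx; [case: (leP (t/2) x) => h|case: (leP (t/2) 1) => h];
  apply/andP; split; lra.
Qed.

Lemma clamp_id t x : t / 2 <= x <= 1 -> clamp t x = x.
Proof.
move=> /andP[h1 h2]; rewrite /clamp.
case: (leP x 1) => hx; [case: (leP (t/2) x) => h|case: (leP (t/2) 1) => h];
  lra.
Qed.

Section Props.
Variable d : R -> R.
Hypothesis hd : in_DLSL d.
Lemma DL_range u : 0 <= u <= 1 -> 0 <= d u /\ d u <= 1.
Proof. by case: hd => [[h _] _]; exact: h. Qed.
Lemma DL_1 : d 1 = 1.
Proof. by case: hd => [[_ [_ [? _]]] _]. Qed.
Lemma DL_mono u v : 0 <= u -> u <= v -> v <= 1 -> d u <= d v.
Proof. by case: hd => [[_ [_ [_ [h _]]]] _]; exact: h. Qed.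
Lemma DL_lip u v : 0 <= u <= 1 -> 0 <= v <= 1 -> `|d v - d u| <= 2 * `|v - u|.
Proof. by case: hd => [[_ [_ [_ [_ h]]]] _]; exact: h. Qed.
Lemma DL_P1 x y : 0 < x -> x <= y -> y <= 1 -> d x / x <= d y / y.
Proof. by case: hd => [_ [h _]]; exact: h. Qed.
Lemma DL_P2 x y : 0 < x -> x <= y -> y <= 1 -> d y / (y ^+ 2) <= d x / (x ^+ 2).
Proof. by case: hd => [_ [_ h]]; exact: h. Qed.
End Props.
Arguments DL_range {d}. Arguments DL_1 {d}. Arguments DL_mono {d}. Arguments DL_lip {d}. Arguments DL_P1 {d}. Arguments DL_P2 {d}.


Lemma ft_mono d t x y : in_DLSL d -> 0 < t <= 1 -> x <= y -> ft d t x <= ft d t y.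
Proof.
move=> hd ht xy; rewrite /ft.
have /andP[a1 a2] := @clamp_in t x ht; have /andP[b1 b2] := @clamp_in t y ht.
have /andP[c1 c2] := @clamp_mono t x y xy.
case/andP: ht => ? ?; apply: (DL_P1 hd); lra.
Qed.

Lemma ft_cont d t : in_DLSL d -> 0 < t <= 1 -> continuous (ft d t).
Proof.
move=> hd ht x.
have ht' := ht; case/andP: ht' => t0 t1.
have cc : continuous (clamp t).
  by apply: (@lip_cont _ 1) => // u v; rewrite mul1r clamp_lip.
have cd : continuous (d \o clamp t).
  apply: (@lip_cont _ 2) => // u v /=.
  have /andP[a1 a2] := @clamp_in t u ht; have /andP[b1 b2] := @clamp_in t v ht.
  have h1 : 0 <= clamp t u <= 1 by apply/andP; split; lra.
  have h2 : 0 <= clamp t v <= 1 by apply/andP; split; lra.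
  rewrite distrC (distrC u); apply: le_trans (DL_lip hd _ _ h1 h2) _.
  by rewrite ler_wpM2l // clamp_lip.
rewrite /ft; apply: cvgM; first exact: cd.
apply: cvgV; last exact: cc.
have /andP[a1 a2] := @clamp_in t x ht; apply/eqP; lra.
Qed.

Arguments ft_mono {d t x y}. Arguments ft_cont {d t}.
Definition Phi (d : R -> R) (t x : R) : R := (\int[@lebesgue_measure R]_(u in `[0, x]) ft d t u)%R.

Lemma Phi_deriv (d : R -> R) (t x : R) : in_DLSL d -> 0 < t <= 1 -> 0 < x ->
  is_derive x 1 (Phi d t) (ft d t x).
Proof.
move=> hd ht x0.
have cf := ft_cont hd ht.
have [] := @continuous_FTC1_closed R (ft d t) 0 x (x + 1) _ _ x0 (cf x).
- lra.
- apply: continuous_compact_integrable; first exact: segment_compact.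
  exact: continuous_subspaceT.
move=> dF F'.
rewrite -F' derive1E; exact: derivableP.
Qed.
Arguments Phi_deriv {d t x}.

Definition Qf (d : R -> R) (t c a : R) : R -> R :=
  (c / a) \*: (Phi d t - (Phi d t \o shift (- a))).

Lemma Q_deriv (d : R -> R) (t c a x : R) : in_DLSL d -> 0 < t <= 1 -> 0 < a -> a < x ->
  is_derive x 1 (Qf d t c a) (c / a * (ft d t x - ft d t (x - a))).
Proof.
move=> hd ht a0 ax.
apply: is_derive_eq.
  apply: is_deriveZ; apply: is_deriveB; first by apply: Phi_deriv => //; lra.
  apply: is_derive1_comp.
    apply: Phi_deriv => //=; lra.
by rewrite subr0 mulr1.
Qed.
Arguments Q_deriv {d t c a x}.

Lemma isd_der (f : R -> R) (x df : R) : is_derive x 1 f df -> derivable f x 1.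
Proof. by case. Qed.

Lemma Q_cont (d : R -> R) (t c a x : R) : in_DLSL d -> 0 < t <= 1 -> 0 < a -> a < x ->
  {for x, continuous (Qf d t c a)}.
Proof.
move=> hd ht a0 ax; apply: differentiable_continuous; apply/derivable1_diffP.
exact: isd_der (Q_deriv hd ht a0 ax).
Qed.

Lemma q_cont (d : R -> R) (t c a : R) : in_DLSL d -> 0 < t <= 1 ->
  continuous (fun x => c / a * (ft d t x - ft d t (x - a))).
Proof.
move=> hd ht x; apply: cvgM; first exact: cvg_cst.
apply: cvgB; first exact: ft_cont.
apply: (@continuous_comp _ _ _ (fun y => y - a) (ft d t)); last exact: ft_cont.
by apply: cvgB; [exact: cvg_id|exact: cvg_cst].
Qed.

Lemma int_q (d : R -> R) (t c a : R) : in_DLSL d -> 0 < t < 1 -> 0 < a -> a < t ->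
  (\int[@lebesgue_measure R]_(x in `[t, 1%R]) (c / a * (ft d t x - ft d t (x - a)))%:E
   = (Qf d t c a 1)%:E - (Qf d t c a t)%:E)%E.
Proof.
move=> hd /andP[t0 t1] a0 at_.
have ht : 0 < t <= 1 by rewrite t0 ltW.
apply: continuous_FTC2 => //.
- exact/continuous_subspaceT/q_cont.
- split.
  + move=> x; rewrite in_itv /= => /andP[tx _].
    apply: isd_der (Q_deriv hd ht a0 _); lra.
  + apply: cvg_at_right_filter; apply: Q_cont => //.
  + apply: cvg_at_left_filter; apply: Q_cont => //; lra.
- move=> x; rewrite in_itv /= => /andP[tx _].
  have ax : a < x by lra.
  by rewrite derive1E; case: (Q_deriv (c:=c) hd ht a0 ax) => _ ->.
Qed.

Lemma Phi_incr (d : R -> R) (t y h : R) : in_DLSL d -> 0 < t <= 1 -> 0 < y -> 0 < h ->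
  ft d t y * h <= Phi d t (y + h) - Phi d t y <= ft d t (y + h) * h.
Proof.
move=> hd ht y0 h0.
have yh : y < y + h by lra.
have [] := @MVT R (Phi d t) (ft d t) y (y + h) yh.
- move=> x; rewrite in_itv /= => /andP[yx _]; apply: Phi_deriv => //; lra.
- apply: derivable_within_continuous => x.
  rewrite in_itv /= => /andP[yx _]; apply: isd_der (Phi_deriv hd ht _); lra.
move=> x; rewrite in_itv /= => /andP[yx xy] ->.
rewrite addrAC subrr add0r.
have m1 := @ft_mono d t y x hd ht (ltW yx).
have m2 := @ft_mono d t x (y + h) hd ht (ltW xy).
by apply/andP; split; rewrite ler_pM2r.
Qed.

Lemma Q_bound (d : R -> R) (t c a : R) : in_DLSL d -> 0 < t <= 1 -> 0 <= c -> 0 < a -> a < t ->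
  Qf d t c a 1 - Qf d t c a t <= c * (ft d t 1 - ft d t (t - a)).
Proof.
move=> hd ht c0 a0 at_.
have /andP[_ h1] := @Phi_incr d t (1 - a) a hd ht ltac:(case/andP: ht => ? ?; lra) a0.
have /andP[h2 _] := @Phi_incr d t (t - a) a hd ht ltac:(lra) a0.
rewrite subrK in h1; rewrite subrK in h2.
rewrite /Qf /= !fctE /shift /=.
have key : (Phi d t 1 - Phi d t (1 - a)) - (Phi d t t - Phi d t (t - a))
  <= a * (ft d t 1 - ft d t (t - a)) by lra.
rewrite -mulrBr; apply: le_trans (ler_wpM2l (divr_ge0 c0 (ltW a0)) key) _.
by rewrite mulrA divfK ?gt_eqF.
Qed.

Local Notation mu := (@lebesgue_measure R).
Import HBNNSimple.

Lemma int_mono (D : set R) (mD : measurable D) (g F : R -> \bar R) :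
  (forall x, D x -> (0 <= g x)%E) -> (forall x, D x -> (g x <= F x)%E) ->
  measurable_fun D F ->
  (\int[mu]_(x in D) g x <= \int[mu]_(x in D) F x)%E.
Proof.
move=> g0 gF mF.
rewrite ge0_integralE //.
apply: ge_ereal_sup => _ [h /= hg <-].
rewrite -integralT_nnsfun [X in (_ <= X)%E]integral_mkcond.
apply: ge0_le_integral => //.
- move=> x _; rewrite lee_fin.
  exact: fun_ge0.
- by apply: measurableT_comp => //; exact: measurable_funPT.
- exact: (measurable_restrictT F mD).1 mF.
- move=> x _; apply: le_trans (hg x) _; rewrite /patch; case: ifP => // /set_mem.
  exact: gF.
Qed.

Lemma seq_lim (phi : R -> R) (l : R) (s : R^nat) :
  phi x @[x --> 0^'] --> l -> (forall n, s n < 0) -> s n @[n --> \oo] --> 0 ->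
  phi (s n) @[n --> \oo] --> l.
Proof.
move=> H sn s0.
have H' : phi x @[x --> 0^'-] --> l.
  apply: cvg_trans H; apply: cvg_app; apply: within_subset => x /=.
  by rewrite lt_neqAle => /andP[].
by move/cvg_at_leftP : H'; apply.
Qed.

Arguments seq_lim {phi l s}.
Lemma lim_bounds (v : R^nat) (l lo hi : R) : v n @[n --> \oo] --> l ->
  (forall n, lo <= v n <= hi) -> lo <= l <= hi.
Proof.
move=> vl vb; have <- := cvg_lim (@Rhausdorff R) vl.
apply/andP; split.
- apply: limr_ge; first exact: cvgP vl.
  by near=> n; have /andP[] := vb n.
- apply: limr_le; first exact: cvgP vl.
  by near=> n; have /andP[] := vb n.
Unshelve. all: by end_near.
Qed.

Arguments lim_bounds {v l lo hi}.
Lemma einf_ge0 (v : (\bar R)^nat) : (forall n, (0 <= v n)%E) -> (0 <= limn_einf v)%E.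
Proof.
move=> v0; rewrite limn_einf_lim; apply: lime_ge; first exact: is_cvg_einfs.
near=> n; apply/ereal_infP => _ [m _ <-]; exact: v0.
Unshelve. all: by end_near.
Qed.

Lemma einf_le (v : (\bar R)^nat) (w : R^nat) (B : R) : w n @[n --> \oo] --> B ->
  (forall n, (v n <= (w n)%:E)%E) -> (limn_einf v <= B%:E)%E.
Proof.
move=> wB vw; rewrite limn_einf_lim.
have wB' : ((w n)%:E @[n --> \oo] --> B%:E)%E by apply: cvg_EFin => //; near=> n.
rewrite -(cvg_lim _ wB') //.
apply: lee_lim; [exact: is_cvg_einfs|exact: cvgP wB'|].
near=> n; apply: le_trans (vw n); apply: ereal_inf_lbound; exists n => //=.
Unshelve. all: by end_near.
Qed.

Lemma alg_q (u v ku kv kt : R) : 0 < v -> v < u -> v * kv <= u * ku -> ku <= kv -> ku <= kt ->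
  0 <= (u * ku - v * kv) / (u - v) <= kt.
Proof.
move=> v0 vu h1 h2 h3; have uv : 0 < u - v by lra.
apply/andP; split; first by apply: divr_ge0; lra.
rewrite ler_pdivrMr //; nra.
Qed.

Lemma quot_bounds (d : R -> R) (t u a : R) : in_DLSL d -> 0 < t -> t <= u -> u <= 1 ->
  0 < a -> a <= t / 2 ->
  0 <= (- a)^-1 * (d (- a + u) / (- a + u) - d u / u) <= d t / t ^+ 2.
Proof.
move=> hd t0 tu u1 a0 at2.
set v := - a + u.
have v0 : 0 < v by rewrite /v; lra.
have vu : v <= u by rewrite /v; lra.
have P1 := DL_P1 hd v u v0 vu u1.
have P2 := DL_P2 hd v u v0 vu u1.
have P3 := DL_P2 hd t u t0 tu u1.
have u0 : 0 < u by lra.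
have e1 : d u / u = u * (d u / u ^+ 2).
  by rewrite expr2; field; rewrite gt_eqF.
have e2 : d v / v = v * (d v / v ^+ 2).
  by rewrite expr2; field; rewrite gt_eqF.
have -> : (- a)^-1 * (d v / v - d u / u) = (u * (d u / u ^+ 2) - v * (d v / v ^+ 2)) / (u - v).
  rewrite -e1 -e2 /v invrN mulNr -mulrN opprB mulrC; congr (_ / _); lra.
apply: alg_q => //; first by rewrite /v; lra.
by rewrite -e1 -e2.
Qed.

Definition an (t : R) (n : nat) : R := t / 2 * (2^-1) ^+ n.

Lemma an_gt0 t n : 0 < t -> 0 < an t n.
Proof. by move=> t0; rewrite /an mulr_gt0 ?divr_gt0 ?exprn_gt0 ?invr_gt0. Qed.

Lemma an_le t n : 0 < t -> an t n <= t / 2.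
Proof.
move=> t0; rewrite /an; apply: ler_piMr; first by rewrite divr_ge0 // ltW.
by rewrite exprn_ile1 // ?invr_ge0 // invf_le1 // ler1n.
Qed.

Lemma an_cvg t : an t n @[n --> \oo] --> 0.
Proof.
have := @cvg_geometric R (t / 2) (2^-1).
rewrite /geometric /an; apply.
by rewrite ger0_norm ?invr_ge0 // invf_lt1 // ltr1n.
Qed.

Definition pn (d1 d2 : R -> R) (t : R) (n : nat) (x : R) : \bar R :=
  ((d1 t / t ^+ 2) / an t n * (ft d2 t x - ft d2 t (x - an t n)))%:E.

Lemma pn_ge0 d1 d2 t n x : in_DLSL d1 -> in_DLSL d2 -> 0 < t <= 1 -> (0 <= pn d1 d2 t n x)%E.
Proof.
move=> h1 h2 ht; have /andP[t0 t1] := ht; rewrite lee_fin.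
have [dt0 _] := DL_range h1 t ltac:(apply/andP; split; lra).
have a0 := @an_gt0 t n t0.
apply: mulr_ge0.
  apply: divr_ge0; last exact: ltW.
  by apply: divr_ge0 => //; apply: exprn_ge0; exact: ltW.
rewrite subr_ge0; apply: ft_mono => //; lra.
Qed.

Lemma ptwise (d1 d2 : R -> R) (t u : R) : in_DLSL d1 -> in_DLSL d2 -> 0 < t <= 1 -> t <= u <= 1 ->
  (0 <= (derive1 (fun v => d1 v / v) u * derive1 (fun v => d2 v / v) u)%:E)%E /\
  ((derive1 (fun v => d1 v / v) u * derive1 (fun v => d2 v / v) u)%:E
    <= limn_einf (fun n => pn d1 d2 t n u))%E.
Proof.
move=> h1 h2 ht /andP[tu u1]; have /andP[t0 t1] := ht.
have pge0 : (0 <= limn_einf (fun n => pn d1 d2 t n u))%E.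
  by apply: einf_ge0 => n; exact: pn_ge0.
set l1 := derive1 (fun v => d1 v / v) u.
set l2 := derive1 (fun v => d2 v / v) u.
have [cv1|ncv1] := pselect (cvg ((fun h : R => h^-1 *: (d1 (h + u) / (h + u) - d1 u / u)) @ 0^')); last first.
  have -> : l1 = 0 by rewrite /l1 /derive1; exact: dvgP ncv1.
  by rewrite mul0r.
have [cv2|ncv2] := pselect (cvg ((fun h : R => h^-1 *: (d2 (h + u) / (h + u) - d2 u / u)) @ 0^')); last first.
  have -> : l2 = 0 by rewrite /l2 /derive1; exact: dvgP ncv2.
  by rewrite mulr0.
set c := d1 t / t ^+ 2.
set s := fun n => - an t n.
have sn n : s n < 0 by rewrite /s oppr_lt0; exact: an_gt0.
have s0 : s n @[n --> \oo] --> 0.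
  by rewrite -oppr0; apply: cvgN; exact: an_cvg.
have aa n : 0 < an t n <= t / 2 by rewrite an_gt0 // an_le.
have seq1 := seq_lim cv1 sn s0.
have seq2 := seq_lim cv2 sn s0.
have /andP[l10 l1c] : 0 <= l1 <= c.
  apply: lim_bounds seq1 _ => n; have /andP[a0 a2] := aa n.
  exact: quot_bounds.
have /andP[l20 _] : 0 <= l2 <= d2 t / t ^+ 2.
  apply: lim_bounds seq2 _ => n; have /andP[a0 a2] := aa n.
  exact: quot_bounds.
have pe n : pn d1 d2 t n u = (c * ((s n)^-1 *: (d2 (s n + u) / (s n + u) - d2 u / u)))%:E.
  have /andP[a0 a2] := aa n.
  rewrite /pn /ft !clamp_id; first last.
  - apply/andP; split; lra.
  - apply/andP; split; lra.
  rewrite /s; congr EFin; rewrite (addrC (- an t n) u).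
  set X := d2 u / u; set Y := d2 (u - an t n) / (u - an t n).
  have -> : (- an t n)^-1 *: (Y - X) = (- an t n)^-1 * (Y - X) by [].
  by rewrite invrN mulNr -mulrN opprB mulrA.
have cvE : ((c * ((s n)^-1 *: (d2 (s n + u) / (s n + u) - d2 u / u)))%:E
   @[n --> \oo] --> (c * l2)%:E)%E.
  apply: cvg_EFin; first by near=> n.
  by apply: cvgM; [exact: cvg_cst|exact: seq2].
rewrite (funext pe) (cvg_limn_einf_sup cvE).1.
by rewrite !lee_fin mulr_ge0 // ler_wpM2r.
Unshelve. all: by end_near.
Qed.

Lemma pn_meas d1 d2 t n (D : set R) : in_DLSL d2 -> 0 < t <= 1 -> measurable D ->
  measurable_fun D (pn d1 d2 t n).
Proof.
move=> h2 ht mD; apply/measurable_EFinP; apply: measurable_funTS.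
apply: continuous_measurable_fun; exact: q_cont.
Qed.

Lemma F_meas d1 d2 t (D : set R) : in_DLSL d2 -> 0 < t <= 1 -> measurable D ->
  measurable_fun D (fun x => limn_einf (fun n => pn d1 d2 t n x)).
Proof.
move=> h2 ht mD.
apply: (emeasurable_fun_cvg (fun m x => einfs (fun n => pn d1 d2 t n x) m)).
- move=> m; apply: measurable_fun_einfs => n; exact: pn_meas.
- by move=> x _; rewrite limn_einf_lim; exact: is_cvg_einfs.
Qed.

Lemma int_bound (d1 d2 : R -> R) (t : R) : in_DLSL d1 -> in_DLSL d2 -> 0 < t <= 1 ->
  (0 <= \int[mu]_(x in `[t, 1%R]) (derive1 (fun v => d1 v / v) x * derive1 (fun v => d2 v / v) x)%:E)%E /\
  (\int[mu]_(x in `[t, 1%R]) (derive1 (fun v => d1 v / v) x * derive1 (fun v => d2 v / v) x)%:E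
    <= (d1 t / t ^+ 2 * (1 - d2 t / t))%:E)%E.
Proof.
move=> h1 h2 ht; have /andP[t0 t1] := ht.
have pw x : `[t, 1%R] x -> _ := fun hx =>
  @ptwise d1 d2 t x h1 h2 ht ltac:(by move: hx; rewrite /= in_itv /=).
split; first by apply: integral_ge0 => x hx; exact: (pw x hx).1.
have [dt0 _] := DL_range h1 t ltac:(apply/andP; split; lra).
have c0 : 0 <= d1 t / t ^+ 2 by apply: divr_ge0 => //; apply: exprn_ge0; exact: ltW.
move: t1; rewrite le_eqVlt => /predU1P[t1|t1].
  rewrite t1 set_itv1 integral_set1 lee_fin (DL_1 h2) divr1 expr1n divr1 subrr mulr0 //.
have mD : measurable `[t, 1%R] by exact: measurable_itv.
apply: le_trans (int_mono _ mD _ _ _ _ (F_meas d1 d2 t _ h2 ht mD)) _.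
- by move=> x hx; exact: (pw x hx).1.
- by move=> x hx; exact: (pw x hx).2.
have := fatou mu mD (fun n => pn_meas d1 d2 t n _ h2 ht mD).
move=> /(_ (fun n x _ => @pn_ge0 d1 d2 t n x h1 h2 ht)) fat.
apply: le_trans fat _.
have -> : 1 - d2 t / t = ft d2 t 1 - ft d2 t t.
  rewrite /ft !clamp_id ?(DL_1 h2) ?divr1 //; apply/andP; split; lra.
apply: (@einf_le _ (fun n => d1 t / t ^+ 2 * (ft d2 t 1 - ft d2 t (t - an t n)))).
- apply: cvgM; first exact: cvg_cst.
  apply: cvgB; first exact: cvg_cst.
  apply: (@continuous_cvg _ _ _ _ _ (fun n => t - an t n) (ft d2 t) t (ft_cont h2 ht t)).
  rewrite -[X in _ --> X]subr0; apply: cvgB; [exact: cvg_cst|exact: an_cvg].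
- move=> n; have a0 := @an_gt0 t n t0; have a2 := @an_le t n t0.
  have tt : 0 < t < 1 by rewrite t0 t1.
  rewrite /pn (@int_q d2 t _ (an t n) h2 tt a0); last by lra.
  rewrite -EFinB lee_fin; apply: Q_bound => //; lra.
Qed.

Lemma star_sym (d1 d2 : R -> R) (x : R) : star d1 d2 x = star d2 d1 x.
Proof.
have [x0|x0] := eqVneq x 0.
  by rewrite /star x0 eqxx.
rewrite /star (negbTE x0) [d2 x * d1 x]mulrC.
congr (_ + _ * Rintegral _ _ _).
by apply: funext => u; exact: mulrC.
Qed.

Lemma key (d1 d2 : R -> R) (t : R) : in_DLSL d1 -> in_DLSL d2 -> 0 < t <= 1 ->
  star d1 d2 t <= d1 t.
Proof.
move=> h1 h2 ht; have /andP[t0 t1] := ht.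
have [I0 IB] := @int_bound d1 d2 t h1 h2 ht.
rewrite /star (negbTE (lt0r_neq0 t0)).
have Rle : Rintegral mu `[t, 1] (fun u => derive1 (fun v => d1 v / v) u * derive1 (fun v => d2 v / v) u)
    <= d1 t / t ^+ 2 * (1 - d2 t / t).
  have If : (\int[mu]_(x in `[t, 1%R]) (derive1 (fun v => d1 v / v) x * derive1 (fun v => d2 v / v) x)%:E)%E \is a fin_num.
    by rewrite ge0_fin_numE // (le_lt_trans IB) ?ltey.
    by rewrite /Rintegral -lee_fin fineK.
have t20 : 0 <= t ^+ 2 by apply: exprn_ge0; exact: ltW.
apply: (@le_trans _ _ (d1 t * d2 t / t + t ^+ 2 * (d1 t / t ^+ 2 * (1 - d2 t / t)))).
  by rewrite lerD2l; apply: ler_wpM2l => //.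
have -> : d1 t * d2 t / t + t ^+ 2 * (d1 t / t ^+ 2 * (1 - d2 t / t)) = d1 t.
  by field; rewrite gt_eqF.
by [].
Qed.

Lemma main_aux (d1 d2 : R -> R) :
  in_DLSL d1 -> in_DLSL d2 ->
  forall t : R, 0 <= t <= 1 -> star d1 d2 t <= Num.min (d1 t) (d2 t).
Proof.
move=> h1 h2 t /andP[t0 t1].
move: t0; rewrite le_eqVlt => /predU1P[t0|t0].
  have [a _] := DL_range h1 0 ltac:(by rewrite lexx ler01).
  have [b _] := DL_range h2 0 ltac:(by rewrite lexx ler01).
  by rewrite /star -t0 eqxx le_min a b.
have ht : 0 < t <= 1 by rewrite t0 t1.
by rewrite le_min key // star_sym key.
Qed.
End S.

Theorem mainTheorem2 (R : realType) (d1 d2 : R -> R) :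
  in_DLSL d1 -> in_DLSL d2 ->
  forall t : R, 0 <= t <= 1 -> star d1 d2 t <= Num.min (d1 t) (d2 t).
Proof. exact: main_aux. Qed.
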